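(* Let $\succ$ be a binary relation on $\mathcal{F}$ satisfying Axioms A1–A7 below. Then for all $f\in\mathcal{F}$ and $x,y,z\in X$, if $f\Join x$, $f\succ y$ and $z\succ f$, then $z\succ x$ and $x\succ y$. Axioms: (A1) $\succ$ is asymmetric and transitive, and its restriction to $X$ is non-trivial and negatively transitive. (A2) For all $f,g,h\in\mathcal{F}$, $\{\alpha\in[0,1]:\alpha f+(1-\alpha)g\succ h\}$ and $\{\alpha\in[0,1]:h\succ\alpha f+(1-\alpha)g\}$ are open in $[0,1]$. (A3) For all $f,g\in\mathcal{F}$, $x\in X$, $\alpha\in(0,1)$: $f\succ g$ iff $\alpha f+(1-\alpha)x\succ\alpha g+(1-\alpha)x$. (A4) For all $x\in X$, $\{f:f\succ x\}$ and $\{f:x\succ f\}$ are convex. (A5) If $f(s)\succ g(s)$ for all $s\in S$ then $f\succ g$. (A6) If for all $x\in X$, $f\Join x$ implies $g\Join x$, then $f\Join g$. (A7) If $f\Join x$, $x\succ g$, $g\Join y$, $f\succ y$ (with $x,y\in X$), then $f\succ g$.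
   Context: $S$ is a set of states with algebra $\Sigma$; $X$ is a non-singleton convex subset of a real vector space; $\mathcal{F}$ is the set of simple acts $f:S\to X$ ($\Sigma$-measurable, finitely many values) with pointwise mixtures; elements of $X$ are identified with constant acts. $f\Join g$ means $f\not\succ g$ and $g\not\succ f$. *)

(* Defs.v *)
From HB Require Import structures.
From mathcomp Require Import all_boot all_order all_algebra.
From mathcomp Require Import boolp classical_sets cardinality reals.
Set Implicit Arguments. Unset Strict Implicit. Unset Printing Implicit Defensive.
Import Order.TTheory GRing.Theory Num.Theory.
Local Open Scope classical_set_scope.
Local Open Scope ring_scope.

Section Defs.
Context {R : realType} {V : lmodType R} {S : Type}.

Definition is_algebra (Sig : set (set S)) : Prop :=
  Sig set0 /\ (forall A, Sig A -> Sig (~` A)) /\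
  (forall A B, Sig A -> Sig B -> Sig (A `|` B)).

Definition convex_subset (X : set V) : Prop :=
  forall x y (a : R), X x -> X y -> 0 <= a <= 1 -> X (a *: x + (1 - a) *: y).

Definition cst (x : V) : S -> V := fun _ => x.

Definition mix (a : R) (f g : S -> V) : S -> V :=
  fun s => a *: f s + (1 - a) *: g s.

Definition simple_act (Sig : set (set S)) (X : set V) (f : S -> V) : Prop :=
  (forall s, X (f s)) /\ finite_set (range f) /\
  (forall v, Sig (f @^-1` [set v])).

Definition open_in_unit (P : R -> Prop) : Prop :=
  forall a, 0 <= a <= 1 -> P a ->
    exists2 e : R, 0 < e & forall b, 0 <= b <= 1 -> `|b - a| < e -> P b.

Variables (Sig : set (set S)) (X : set V) (P : (S -> V) -> (S -> V) -> Prop).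
Local Notation F := (simple_act Sig X).

Definition incomp (f g : S -> V) : Prop := ~ P f g /\ ~ P g f.

Definition A1 : Prop :=
  (forall f g, F f -> F g -> P f g -> ~ P g f) /\
  (forall f g h, F f -> F g -> F h -> P f g -> P g h -> P f h) /\
  (exists x y, X x /\ X y /\ P (cst x) (cst y)) /\
  (forall x y z, X x -> X y -> X z ->
     ~ P (cst x) (cst y) -> ~ P (cst y) (cst z) -> ~ P (cst x) (cst z)).

Definition A2 : Prop :=
  forall f g h, F f -> F g -> F h ->
    open_in_unit (fun a => P (mix a f g) h) /\
    open_in_unit (fun a => P h (mix a f g)).

Definition A3 : Prop :=
  forall f g x (a : R), F f -> F g -> X x -> 0 < a < 1 ->
    (P f g <-> P (mix a f (cst x)) (mix a g (cst x))).

Definition A4 : Prop :=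
  forall x, X x ->
    (forall f g (a : R), F f -> F g -> 0 <= a <= 1 ->
       P f (cst x) -> P g (cst x) -> P (mix a f g) (cst x)) /\
    (forall f g (a : R), F f -> F g -> 0 <= a <= 1 ->
       P (cst x) f -> P (cst x) g -> P (cst x) (mix a f g)).

Definition A5 : Prop :=
  forall f g, F f -> F g -> (forall s, P (cst (f s)) (cst (g s))) -> P f g.

Definition A6 : Prop :=
  forall f g, F f -> F g ->
    (forall x, X x -> incomp f (cst x) -> incomp g (cst x)) -> incomp f g.

Definition A7 : Prop :=
  forall f g x y, F f -> F g -> X x -> X y ->
    incomp f (cst x) -> P (cst x) g -> incomp g (cst y) -> P f (cst y) ->
    P f g.

End Defs.

(* Main.v *)
Require Import Defs.
From HB Require Import structures.
From mathcomp Require Import all_boot all_order all_algebra.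
From mathcomp Require Import boolp classical_sets cardinality reals.
From Stdlib Require Import Classical.
Local Open Scope classical_set_scope.
Local Open Scope ring_scope.

Lemma cst_simple (R : realType) (V : lmodType R) (S : Type)
  (Sig : set (set S)) (X : set V) (v : V) :
  is_algebra Sig -> X v -> simple_act Sig X (cst v).
Proof.
move=> [H0 [HC _]] Xv; split; first by [].
split.
  apply: (@sub_finite_set _ _ [set v]); last exact: finite_set1.
  by move=> u [s _ <-].
move=> u; have [->|neq] := pselect (v = u).
  have -> : cst (S:=S) u @^-1` [set u] = ~` set0.
    by apply/seteqP; split => s //= _.
  exact: HC.
have -> : cst (S:=S) v @^-1` [set u] = set0.
  by apply/seteqP; split => s //=.
exact: H0.
Qed.

Theorem lemma1 (R : realType) (V : lmodType R) (S : Type)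
  (Sig : set (set S)) (X : set V) (P : (S -> V) -> (S -> V) -> Prop) :
  is_algebra Sig ->
  convex_subset X ->
  (exists x y, X x /\ X y /\ x <> y) ->
  A1 Sig X P -> A2 Sig X P -> A3 Sig X P -> A4 Sig X P ->
  A5 Sig X P -> A6 Sig X P -> A7 Sig X P ->
  forall (f : S -> V) (x y z : V),
    simple_act Sig X f -> X x -> X y -> X z ->
    incomp P f (cst x) -> P f (cst y) -> P (cst z) f ->
    P (cst z) (cst x) /\ P (cst x) (cst y).
Proof.
move=> alg _ _ [asym [trans [_ ntr]]] _ _ _ _ a6 a7 f x y z Ff Xx Xy Xz
  [fx xf] fy zf.
have C := fun v (Xv : X v) => @cst_simple _ _ _ _ _ v alg Xv.
split.
- apply: NNPP => nzx.
  have [xz|nxz] := pselect (P (cst x) (cst z)).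
    by apply: xf; apply: trans (C _ Xx) (C _ Xz) Ff xz zf.
  have [w [Xw [fw nzw]]] : exists w, X w /\ incomp P f (cst w) /\
      ~ incomp P (cst z) (cst w).
    apply: NNPP => H; have : incomp P f (cst z).
      apply: (a6 _ _ Ff (C _ _)) => // w Xw fw; apply: NNPP => nzw; apply: H; by exists w.
    by case=> _; apply.
  have zw : P (cst z) (cst w).
    apply: NNPP => nzw'; apply: nzw; split => // wz.
    by case: fw => _; apply; apply: trans (C _ Xw) (C _ Xz) Ff wz zf.
  have xw : P (cst x) (cst w).
    apply: NNPP => nxw; exact: (ntr z x w Xz Xx Xw nzx nxw zw).
  apply: xf; apply: (a7 (cst x) f z w (C _ Xx) Ff Xz Xw) => //.
- apply: NNPP => nxy.
  have [yx|nyx] := pselect (P (cst y) (cst x)).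
    by apply: fx; apply: trans Ff (C _ Xy) (C _ Xx) fy yx.
  have [w [Xw [fw nyw]]] : exists w, X w /\ incomp P f (cst w) /\
      ~ incomp P (cst y) (cst w).
    apply: NNPP => H; have : incomp P f (cst y).
      apply: (a6 _ _ Ff (C _ _)) => // w Xw fw; apply: NNPP => nyw; apply: H; by exists w.
    by case=> + _; apply.
  have wy : P (cst w) (cst y).
    apply: NNPP => nwy; apply: nyw; split => // yw.
    by case: fw => + _; apply; apply: trans Ff (C _ Xy) (C _ Xw) fy yw.
  have wx : P (cst w) (cst x).
    apply: NNPP => nwx; exact: (ntr w x y Xw Xx Xy nwx nxy wy).
  apply: fx; apply: (a7 f (cst x) w y Ff (C _ Xx) Xw Xy) => //.
Qed.
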